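(* Let $K\subseteq\mathbb{R}^n$ be a nonempty compact set, let $\mathbf{c}\in\mathbb{Z}^n$, let $F:=F_K(\mathbf{c})$, and assume $h_K(\mathbf{c})\in\mathbb{Z}$. Then for every $\mathbf{a}\in\mathbb{Z}^n$ there exists $N\ge0$ such that $$H^{\rm cg}_K(\mathbf{a}+i\mathbf{c})\cap H^=_K(\mathbf{c}) = H^{\rm cg}_F(\mathbf{a})\cap H^=_K(\mathbf{c})\quad\text{for all integers } i\ge N.$$
   Context: $h_K(\mathbf{a})=\sup_{\mathbf{x}\in K}\mathbf{a}\mathbf{x}$ (with $h_\emptyset\equiv-\infty$). For nonempty compact $K$: $H^=_K(\mathbf{a}):=\{\mathbf{x}\in\mathbb{R}^n:\mathbf{a}\mathbf{x}=h_K(\mathbf{a})\}$ and $F_K(\mathbf{a}):=K\cap H^=_K(\mathbf{a})$. For $\mathbf{a}\in\mathbb{Z}^n$, the CG cut of $K$ induced by $\mathbf{a}$ is the halfspace $H^{\rm cg}_K(\mathbf{a}):=\{\mathbf{x}\in\mathbb{R}^n:\mathbf{a}\mathbf{x}\le\lfloor h_K(\mathbf{a})\rfloor\}$. *)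

(* Defs.v *)
From HB Require Import structures.
From mathcomp Require Import all_boot all_order all_algebra.
From mathcomp Require Import all_classical all_reals all_analysis.
Set Implicit Arguments. Unset Strict Implicit. Unset Printing Implicit Defensive.
Import Order.TTheory GRing.Theory Num.Theory.
Import numFieldNormedType.Exports.
Local Open Scope ring_scope.
Local Open Scope classical_set_scope.

Definition idot (R : realType) (n : nat) (a : 'rV[int]_n) (x : 'rV[R]_n) : R :=
  \sum_(i < n) (a 0 i)%:~R * x 0 i.

Definition hK (R : realType) (n : nat) (K : set 'rV[R]_n) (a : 'rV[int]_n) : R :=
  sup [set idot a x | x in K].

Definition Heq (R : realType) (n : nat) (K : set 'rV[R]_n) (a : 'rV[int]_n)
  : set 'rV[R]_n := [set x | idot a x = hK K a].

Definition face (R : realType) (n : nat) (K : set 'rV[R]_n) (a : 'rV[int]_n)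
  : set 'rV[R]_n := K `&` Heq K a.

Definition Hcg (R : realType) (n : nat) (K : set 'rV[R]_n) (a : 'rV[int]_n)
  : set 'rV[R]_n := [set x | idot a x <= (Num.floor (hK K a))%:~R].

(* Main.v *)
Require Import Defs.
From HB Require Import structures.
From mathcomp Require Import all_boot all_order all_algebra.
From mathcomp Require Import all_classical all_reals all_analysis.
From mathcomp Require Import lra.
Import Order.TTheory GRing.Theory Num.Theory.
Import numFieldNormedType.Exports.
Local Open Scope ring_scope.
Local Open Scope classical_set_scope.

Lemma cont_sum (T : topologicalType) (R : realType) (I : Type) (r : seq I)
  (f : I -> T -> R) : (forall i, continuous (f i)) ->
  continuous (fun y => \sum_(i <- r) f i y).
Proof.
move=> H; elim: r => [|j r IH] x.
  rewrite /continuous_at /=. under eq_fun do rewrite big_nil. rewrite big_nil. exact: cvg_cst.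
under eq_fun do rewrite big_cons. rewrite ?big_cons.
by apply: cvgD; [exact: H|exact: IH].
Qed.

Lemma idot_cont {R : realType} {n} (a : 'rV[int]_n) : continuous (@idot R n a).
Proof.
have := @cont_sum _ R _ (index_enum 'I_n) (fun i (x : 'rV[R]_n) => (a 0 i)%:~R * x 0 i).
apply => i x.
have h1 := @coord_continuous R 1 n 0 i.
have h2 := @mulrl_continuous R ((a 0 i)%:~R).
exact: (continuous_comp (h1 x) (h2 _)).
Qed.

Lemma idot_lin (R : realType) n (a c : 'rV[int]_n) (k : nat) (x : 'rV[R]_n) :
  idot (a + k%:R *: c) x = idot a x + k%:R * idot c x.
Proof.
rewrite /idot mulr_sumr -big_split; apply: eq_bigr => i _ /=.
rewrite !mxE intrD mulrDl; congr (_ + _).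
rewrite /GRing.scale /= intrM mulrA; congr (_ * _ * _).
by rewrite rmorph_nat.
Qed.

Lemma attain {R : realType} {n} {f : 'rV[R]_n -> R} {S : set 'rV[R]_n} :
  S !=set0 -> compact S -> continuous f ->
  exists2 x0, S x0 & (forall y, S y -> f y <= f x0) /\ sup [set f x | x in S] = f x0.
Proof.
move=> S0 cS cf.
have [x0 /set_mem Sx0 mx] := compact_EVT_max S0 cS (continuous_subspaceT cf).
exists x0 => //; split; first by move=> y Sy; apply: mx; exact/mem_set.
apply/eqP; rewrite eq_le; apply/andP; split.
  by apply: ge_sup; [exists (f x0); exists x0|move=> _ [y Sy <-]; apply: mx; exact/mem_set].
apply: sup_upper_bound; last by exists x0.
split; first by exists (f x0); exists x0.
by exists (f x0) => _ [y Sy <-]; apply: mx; exact/mem_set.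
Qed.

Theorem lemma2p4 (R : realType) (n : nat) (K : set 'rV[R]_n) (c : 'rV[int]_n) :
  K !=set0 -> compact K ->
  hK K c \is a Num.int ->
  forall a : 'rV[int]_n, exists N : nat, forall i : nat, (N <= i)%N ->
    Hcg K (a + i%:R *: c) `&` Heq K c = Hcg (face K c) a `&` Heq K c.
Proof.
move=> K0 cK /intrP [z hz] a.
have [x0 Kx0 [mx0 hx0]] := attain K0 cK (idot_cont c).
have hx0' : hK K c = idot c x0 := hx0.
have clH : closed (Heq K c).
  have := @preimage_closed _ R (idot c) [set y | y = hK K c] (fun x _ => idot_cont c x) (@closed_eq R (hK K c)).
  by [].
have cF : compact (face K c) by exact: compact_closedI.
have F0 : face K c !=set0 by exists x0; split => //; rewrite /Heq /= hx0'.
have [x1 [Kx1 Hx1] [mx1 hx1]] := attain F0 cF (idot_cont a).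
have hx1' : hK (face K c) a = idot a x1 := hx1.
have [x2 Kx2 [mx2 _]] := attain K0 cK (idot_cont a).
set hF := hK (face K c) a.
set fl := Num.floor hF.
set m' := (hF + (fl + 1)%:~R) / 2.
have hFlt : hF < (fl + 1)%:~R by exact: real_floorD1_gt (num_real _).
have hFm : hF < m' by rewrite /m' ltr_pdivlMr // mulr2n mulrDr mulr1 ltrD2l.
have mlt : m' < (fl + 1)%:~R by rewrite /m' ltr_pdivrMr // mulr2n mulrDr mulr1 ltrD2r.
set h := hK K c.
have Kch y : K y -> idot c y <= h by move=> Ky; rewrite /h hx0'; exact: mx0.
have Flt y : K y -> idot c y = h -> idot a y <= hF.
  by move=> Ky Hy; rewrite /hF hx1'; apply: mx1; split.
have key : exists N : nat, forall i : nat, (N <= i)%N ->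
    forall x, K x -> idot (a + i%:R *: c) x <= m' + i%:R * h.
  pose D := K `&` [set x | m' <= idot a x].
  have small i x : K x -> idot a x < m' -> idot (a + i%:R *: c) x <= m' + i%:R * h.
    move=> Kx ax; rewrite idot_lin; apply: lerD; first exact: ltW.
    by apply: ler_wpM2l => //; exact: Kch.
  have [D0|Dn0] := pselect (D !=set0); last first.
    exists 0%N => i _ x Kx; apply: small => //; rewrite ltNge; apply/negP => ax.
    by apply: Dn0; exists x.
  have clD : closed [set x | m' <= idot a x].
    have := @preimage_closed _ R (idot a) [set y | m' <= y] (fun x _ => idot_cont a x) (@closed_ge R m').
    by [].
  have cD : compact D by exact: compact_closedI.
  have [y0 [Ky0 Dy0] [my0 _]] := attain D0 cD (idot_cont c).
  have ylt : idot c y0 < h.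
    rewrite lt_neqAle Kch // andbT; apply/eqP => e.
    by have := Flt _ Ky0 e; rewrite leNgt => /negP; apply; apply: lt_le_trans hFm Dy0.
  set eps := h - idot c y0.
  have eps0 : 0 < eps by rewrite subr_gt0.
  set M := idot a x2.
  exists (Num.truncn ((M - m') / eps)).+1 => i Ni x Kx.
  have [ax|ax] := ltP (idot a x) m'; first exact: small.
  rewrite idot_lin.
  have cx : idot c x <= h - eps.
    by rewrite /eps opprB addrC subrK; apply: my0; split.
  have : i%:R * idot c x <= i%:R * (h - eps) by apply: ler_wpM2l.
  have : M - m' <= i%:R * eps.
    have := Num.Theory.real_truncnS_gt (num_real ((M - m') / eps)).
    rewrite ltr_pdivrMr // => /ltW/le_trans; apply.
    by apply: ler_wpM2r; [exact: ltW|rewrite ler_nat].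
  have := mx2 _ Kx.
  rewrite -/M => A C B; apply: (le_trans (lerD A B)); move: C.
  clearbody eps; rewrite mulrBr.
  move: (i%:R * eps) (i%:R * h) => u v; lra.
have [N HN] := key; exists N => i Ni.
have [x3 Kx3 [mx3 hx3]] := attain K0 cK (idot_cont (a + i%:R *: c)).
have hKi : hK K (a + i%:R *: c) = idot (a + i%:R *: c) x3 := hx3.
have up : hK K (a + i%:R *: c) <= m' + i%:R * h by rewrite hKi; exact: HN.
have cx1 : idot c x1 = h := Hx1.
have low : hF + i%:R * h <= hK K (a + i%:R *: c).
  by rewrite hKi -cx1 /hF hx1' -idot_lin; exact: mx3.
have flle : fl%:~R <= hF by exact: Num.Theory.real_floor_le (num_real _).
have hzr : h = z%:~R := hz.
have fleq : Num.floor (hK K (a + i%:R *: c)) = fl + i%:R * z.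
  apply: Num.Theory.floor_def; rewrite !intrD intrM rmorph_nat -hzr; apply/andP; split.
    exact: le_trans (lerD flle (lexx _)) low.
  apply: (le_lt_trans up); move: mlt; rewrite intrD.
  move: (i%:R * h) => v; lra.
apply/seteqP; split => x [H1 H2]; split => //; move: H1; rewrite /Hcg /= fleq -/hF -/fl;
  rewrite idot_lin (_ : idot c x = h) // intrD intrM rmorph_nat -hzr lerD2r //.
Qed.
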